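(* Let $r\ge 2$ and $n\ge 2r$, and let $\mathrm{Fork}_{n,r}(x)=n+1$ if $x=0^r1^{n-r}$ (the valley), $n+2$ if $x=1^{n-r}0^r$ (the optimum), and $|x|_1$ otherwise. For any run of the (1+1) EA (mutation probability $1/n$, uniform random initialization) on $\mathrm{Fork}_{n,r}$, let $V$ be the event that the valley occurs as the current best solution before the optimum does. Then $\Pr(V)=\tfrac12$.
   Context: The (1+1) EA with mutation probability $1/n$: start with $x$ uniform in $\{0,1\}^n$; each iteration create $y$ by flipping each bit of $x$ independently with probability $1/n$, and set $x\gets y$ if $f(y)\ge f(x)$. *)

(* Defs.v *)
From HB Require Import structures.
From mathcomp Require Import all_boot all_order all_algebra.
From mathcomp Require Import all_classical all_reals all_analysis.
Set Implicit Arguments. Unset Strict Implicit. Unset Printing Implicit Defensive.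
Import Order.TTheory GRing.Theory Num.Theory.
Local Open Scope ring_scope.

(* Bit strings x = x_1 ... x_n, position k+1 is [x k] for [k : 'I_n]. *)
Definition bits (n : nat) := {ffun 'I_n -> bool}.

Definition onemax (n : nat) (x : bits n) : nat := \sum_(i < n) (x i : nat).

Definition valley (n r : nat) : bits n := [ffun i : 'I_n => (r <= i)%N].
Definition optimum (n r : nat) : bits n := [ffun i : 'I_n => (i < n - r)%N].

Definition fork (n r : nat) (x : bits n) : nat :=
  if x == valley n r then n.+1
  else if x == optimum n r then n.+2
  else onemax x.

Definition mut_prob (R : realType) (n : nat) (x y : bits n) : R :=
  \prod_(i < n) (if x i == y i then 1 - n%:R^-1 else n%:R^-1).

Definition select (n r : nat) (x y : bits n) : bits n :=
  if (fork r x <= fork r y)%N then y else x.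

(* [valley_first_within t x]: probability that the (1+1) EA on Fork_{n,r},
   with current solution x at time 0, has the valley as current solution
   at some time <= t, strictly before the optimum ever was the current
   solution. *)
Fixpoint valley_first_within (R : realType) (n r : nat) (t : nat) (x : bits n)
  : R :=
  match t with
  | 0 => if x == valley n r then 1 else 0
  | t'.+1 =>
      if x == valley n r then 1
      else if x == optimum n r then 0
      else \sum_(y : bits n) mut_prob R x y *
                             valley_first_within R r t' (select r x y)
  end.

Definition prob_valley_first_within (R : realType) (n r t : nat) : R :=
  \sum_(x : bits n) (2 ^+ n)^-1 * valley_first_within R r t x.

(* Main.v *)
Require Import Defs.
From HB Require Import structures.
From mathcomp Require Import all_boot all_order all_algebra.
From mathcomp Require Import all_classical all_reals all_analysis.
From mathcomp Require Import zify ring lra.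
Set Implicit Arguments. Unset Strict Implicit. Unset Printing Implicit Defensive.
Import numFieldNormedType.Exports.
Import Order.TTheory GRing.Theory Num.Theory.
Local Open Scope classical_set_scope.
Local Open Scope ring_scope.

Definition brev (n : nat) (x : bits n) : bits n := [ffun i => x (rev_ord i)].

Lemma brevK n (x : bits n) : brev (brev x) = x.
Proof. by apply/ffunP => i; rewrite !ffunE rev_ordK. Qed.

Lemma brev_inj n : injective (@brev n).
Proof. exact: can_inj (@brevK n). Qed.

Lemma onemax_rev n (x : bits n) : onemax (brev x) = onemax x.
Proof.
rewrite /onemax [RHS](reindex_inj rev_ord_inj) /=.
by apply: eq_bigr => i _; rewrite ffunE.
Qed.

Lemma mut_rev (R : realType) n (x y : bits n) :
  mut_prob R (brev x) (brev y) = mut_prob R x y.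
Proof.
rewrite /mut_prob [RHS](reindex_inj rev_ord_inj) /=.
by apply: eq_bigr => i _; rewrite !ffunE.
Qed.

Lemma rev_valley n r : brev (valley n r) = optimum n r.
Proof.
apply/ffunP => i; rewrite !ffunE /=.
have := ltn_ord i.
case: (leqP r (n - i.+1)) => h1; case: (ltnP i (n - r)) => h2 //; lia.
Qed.

Lemma rev_opt n r : brev (optimum n r) = valley n r.
Proof. by rewrite -rev_valley brevK. Qed.

Lemma rev_eq_v n r (x : bits n) : (brev x == valley n r) = (x == optimum n r).
Proof. by rewrite -rev_opt (inj_eq (@brev_inj n)). Qed.

Lemma rev_eq_o n r (x : bits n) : (brev x == optimum n r) = (x == valley n r).
Proof. by rewrite -rev_valley (inj_eq (@brev_inj n)). Qed.

Lemma v_neq_o n r : (2 <= r)%N -> (2 * r <= n)%N -> valley n r != optimum n r.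
Proof.
move=> hr hn; apply/eqP => /ffunP.
have h0 : (0 < n)%N by lia.
move/(_ (Ordinal h0)); rewrite !ffunE /=.
case: (leqP r 0) => h1; case: (ltnP 0 (n - r)) => h2 //; lia.
Qed.

Lemma onemax_le n (x : bits n) : (onemax x <= n)%N.
Proof.
rewrite /onemax.
have H : (\sum_(i < n) (x i : nat) <= \sum_(i < n) 1)%N.
  by apply: leq_sum => i _; exact: leq_b1.
by rewrite sum1_card card_ord in H.
Qed.

Lemma fork_ns n r (x : bits n) : x != valley n r -> x != optimum n r ->
  fork r x = onemax x.
Proof. by rewrite /fork => /negbTE -> /negbTE ->. Qed.

Lemma select_valley n r (x : bits n) : x != optimum n r ->
  select r x (valley n r) = valley n r.
Proof.
move=> ho; rewrite /select /fork eqxx.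
case: eqP => [_|_]; first by rewrite ltnSn.
by rewrite (negbTE ho) (leq_trans (onemax_le x)).
Qed.


Lemma select_rev n r (x y : bits n) : (2 <= r)%N -> (2 * r <= n)%N ->
  x != valley n r -> x != optimum n r ->
  select r (brev x) (brev y) = brev (select r x y).
Proof.
move=> hr hn hv ho.
have hvo := v_neq_o hr hn.
have hv' : brev x != valley n r by rewrite rev_eq_v.
have ho' : brev x != optimum n r by rewrite rev_eq_o.
rewrite /select (fork_ns hv' ho') (fork_ns hv ho) onemax_rev.
have hle := onemax_le x.
suff -> : (onemax x <= fork r (brev y))%N = (onemax x <= fork r y)%N.
  by case: ifP.
rewrite /fork rev_eq_v rev_eq_o.
case: (eqVneq y (valley n r)) => [->|hyv].
  by rewrite (negbTE hvo); apply/idP/idP => _; lia.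
case: (eqVneq y (optimum n r)) => [_|hyo].
  by apply/idP/idP => _; lia.
by rewrite onemax_rev.
Qed.

Fixpoint first (R : realType) n r (u w : bits n) (t : nat) (x : bits n) : R :=
  match t with
  | 0 => if x == u then 1 else 0
  | t'.+1 => if x == u then 1 else if x == w then 0 else
      \sum_(y : bits n) mut_prob R x y * first R r u w t' (select r x y)
  end.

Fixpoint cont (R : realType) n r (t : nat) (x : bits n) : R :=
  match t with
  | 0 => if x == valley n r then 0 else if x == optimum n r then 0 else 1
  | t'.+1 => if x == valley n r then 0 else if x == optimum n r then 0 else
      \sum_(y : bits n) mut_prob R x y * cont R r t' (select r x y)
  end.

Lemma vfw_first (R : realType) n r t (x : bits n) :
  valley_first_within R r t x = first R r (valley n r) (optimum n r) t x.
Proof.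
elim: t x => [|t IH] x //=.
by under eq_bigr do rewrite IH.
Qed.

Lemma first_rev (R : realType) n r t (x : bits n) : (2 <= r)%N -> (2 * r <= n)%N ->
  first R r (valley n r) (optimum n r) t (brev x) =
  first R r (optimum n r) (valley n r) t x.
Proof.
move=> hr hn; elim: t x => [|t IH] x /=; first by rewrite rev_eq_v.
rewrite rev_eq_v rev_eq_o.
case: (eqVneq x (optimum n r)) => // hxo.
case: (eqVneq x (valley n r)) => // hxv.
rewrite (reindex_inj (@brev_inj n)) /=.
apply: eq_bigr => y _.
by rewrite mut_rev select_rev // IH.
Qed.

Lemma sum_mut (R : realType) n (x : bits n) : \sum_(y : bits n) mut_prob R x y = 1.
Proof.
rewrite /mut_prob.
set q : R := n%:R^-1.
have := bigA_distr_bigA (fun (i : 'I_n) (b : bool) => if x i == b then 1 - q else q).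
move=> /= <-.
apply: big1 => i _.
rewrite big_bool /=; case: (x i) => /=; ring.
Qed.

Lemma sum3 (R : realType) n r t (x : bits n) : (2 <= r)%N -> (2 * r <= n)%N ->
  first R r (valley n r) (optimum n r) t x +
  first R r (optimum n r) (valley n r) t x + cont R r t x = 1.
Proof.
move=> hr hn; have hvo := v_neq_o hr hn.
elim: t x => [|t IH] x /=.
  case: (eqVneq x (valley n r)) => [hxv|hv].
    by rewrite hxv (negbTE hvo); ring.
  case: (eqVneq x (optimum n r)) => [_|ho]; ring.
case: (eqVneq x (valley n r)) => [hxv|hv].
  by rewrite hxv (negbTE hvo); ring.
case: (eqVneq x (optimum n r)) => [_|ho]; first ring.
rewrite -!big_split /= -(sum_mut R x).
by apply: eq_bigr => y _; rewrite -!mulrDr IH mulr1.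
Qed.

Lemma q_bounds (R : realType) n : (2 <= n)%N ->
  0 < (n%:R^-1 : R) /\ (n%:R^-1 : R) <= 1 - n%:R^-1.
Proof.
move=> hn.
have h2 : (2 : R) <= n%:R by rewrite (ler_nat R 2 n).
have hn0 : (n%:R : R) != 0 by rewrite pnatr_eq0; lia.
have hq : (n%:R : R)^-1 * n%:R = 1 by rewrite mulVf.
have hpos : 0 < (n%:R : R)^-1 by rewrite invr_gt0; lra.
split => //; nra.
Qed.

Lemma mut_ge0 (R : realType) n (x y : bits n) : (2 <= n)%N -> 0 <= mut_prob R x y.
Proof.
move=> hn; have [h1 h2] := q_bounds R hn.
rewrite /mut_prob; apply: prodr_ge0 => i _; case: ifP => _; lra.
Qed.

Lemma mut_lb (R : realType) n (x y : bits n) : (2 <= n)%N ->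
  (n%:R^-1 : R) ^+ n <= mut_prob R x y.
Proof.
move=> hn; have [h1 h2] := q_bounds R hn.
have -> : (n%:R^-1 : R) ^+ n = \prod_(i < n) (n%:R^-1 : R).
  by rewrite prodr_const card_ord.
rewrite /mut_prob; apply: ler_prod => i _; case: ifP => _; lra.
Qed.

Lemma cont_v (R : realType) n r t : cont R r t (valley n r) = 0.
Proof. by case: t => [|t] /=; rewrite eqxx. Qed.

Lemma cont_bound (R : realType) n r t (x : bits n) : (2 <= r)%N -> (2 * r <= n)%N ->
  0 <= cont R r t x <= (1 - (n%:R^-1 : R) ^+ n) ^+ t.
Proof.
move=> hr hn.
have hn2 : (2 <= n)%N by lia.
have [h1 h2] := q_bounds R hn2.
set p := (n%:R^-1 : R) ^+ n.
have hp0 : 0 < p by rewrite exprn_gt0.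
have hp1 : p <= 1.
  rewrite /p; apply: exprn_ile1; lra.
have hpt : forall t, 0 <= (1 - p) ^+ t by move=> k; apply: exprn_ge0; lra.
elim: t x => [|t IH] x /=.
  by case: ifP => _; [|case: ifP => _]; rewrite ?lexx ?ler01.
case: (eqVneq x (valley n r)) => [_|hv]; first by rewrite lexx hpt.
case: (eqVneq x (optimum n r)) => [_|ho]; first by rewrite lexx hpt.
apply/andP; split.
  by apply: sumr_ge0 => y _; apply: mulr_ge0; [exact: mut_ge0|case/andP: (IH (select r x y))].
rewrite (bigD1 (valley n r)) //= select_valley // cont_v mulr0 add0r.
have hs := sum_mut R x.
rewrite (bigD1 (valley n r)) //= in hs.
have hm := mut_lb R x (valley n r) hn2.
apply: le_trans (_ : \sum_(y | y != valley n r) mut_prob R x y * (1 - p) ^+ t <= _).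
  apply: ler_sum => y _; apply: ler_wpM2l; first exact: mut_ge0.
  by case/andP: (IH (select r x y)).
rewrite -mulr_suml exprS.
have -> : \sum_(i | i != valley n r) mut_prob R x i = 1 - mut_prob R x (valley n r) by rewrite -hs; ring.
apply: ler_wpM2r; first exact: hpt.
rewrite /p in hm *; lra.
Qed.

Lemma card_bits n : #|{: bits n}| = (2 ^ n)%N.
Proof. by rewrite card_ffun card_bool card_ord. Qed.

Lemma prob_eq (R : realType) n r t : (2 <= r)%N -> (2 * r <= n)%N ->
  prob_valley_first_within R n r t =
  1 / 2 - (2 ^+ n)^-1 / 2 * \sum_(x : bits n) cont R r t x.
Proof.
move=> hr hn.
rewrite /prob_valley_first_within -mulr_sumr.
under eq_bigr do rewrite vfw_first.
set Sa := \sum_(x : bits n) _.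
have hab : Sa = \sum_(x : bits n) first R r (optimum n r) (valley n r) t x.
  rewrite /Sa (reindex_inj (@brev_inj n)) /=.
  by apply: eq_bigr => x _; rewrite first_rev.
have htot : Sa + \sum_(x : bits n) first R r (optimum n r) (valley n r) t x
   + \sum_(x : bits n) cont R r t x = 2 ^+ n.
  rewrite /Sa -!big_split /=.
  under eq_bigr do rewrite sum3 //.
  by rewrite sumr_const card_bits natrX.
rewrite -hab in htot.
have h2n : (2 ^+ n : R) != 0 by rewrite expf_neq0 // pnatr_eq0.
have -> : Sa = (2 ^+ n - \sum_(x : bits n) cont R r t x) / 2.
  by rewrite -htot; field.
by field.
Qed.

Theorem lemma1 (R : realType) (n r : nat) :
  (2 <= r)%N -> (2 * r <= n)%N ->
  prob_valley_first_within R n r t @[t --> \oo] --> (1 / 2 : R).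
Proof.
move=> hr hn.
have hn2 : (2 <= n)%N by lia.
have [h1 h2] := q_bounds R hn2.
set p := (n%:R^-1 : R) ^+ n.
have hp0 : 0 < p by rewrite exprn_gt0.
have hp1 : p <= 1.
  rewrite /p; apply: exprn_ile1; lra.
have h2n : (0 : R) < 2 ^+ n by rewrite exprn_gt0.
apply: (@squeeze_cvgr _ _ _ _ (fun t => 1 / 2 - (1 - p) ^+ t / 2) (fun=> 1 / 2)).
- apply: nearW => t; rewrite prob_eq //.
  have hS : 0 <= \sum_(x : bits n) cont R r t x <= 2 ^+ n * (1 - p) ^+ t.
    apply/andP; split.
      by apply: sumr_ge0 => x _; case/andP: (cont_bound R t x hr hn).
    have -> : (2 ^+ n : R) * (1 - p) ^+ t = \sum_(x : bits n) (1 - p) ^+ t.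
      by rewrite sumr_const card_bits -[RHS]mulr_natl natrX.
    by apply: ler_sum => x _; case/andP: (cont_bound R t x hr hn).
  case/andP: hS => hS1 hS2.
  have hinv : (2 ^+ n : R)^-1 * 2 ^+ n = 1 by rewrite mulVf // gt_eqF.
  have hinv0 : (0 : R) < (2 ^+ n)^-1 by rewrite invr_gt0.
  apply/andP; split; nra.
- have hlt : `|1 - p| < 1 by rewrite ger0_norm; lra.
  have H1 := cvg_expr hlt.
  have H0 : (fun=> (2^-1 : R)) @ \oo --> (2^-1 : R) by exact: cvg_cst.
  have H2 : (fun t => (1 - p) ^+ t * 2^-1) @ \oo --> (0 * 2^-1 : R).
    by apply: cvgM.
  have H0' : (fun=> (1 / 2 : R)) @ \oo --> (1 / 2 : R) by exact: cvg_cst.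
  have H3 : (fun t => 1 / 2 - (1 - p) ^+ t * 2^-1) @ \oo --> (1 / 2 - 0 * 2^-1 : R).
    by apply: cvgB.
  rewrite mul0r subr0 in H3.
  exact: H3.
- exact: cvg_cst.
Qed.
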